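(* Let $L>0$, $\mu\le0$, $\kappa:=\mu/L$, $\bar h(\kappa):=\frac{3}{1+\kappa+\sqrt{1-\kappa+\kappa^2}}$, and $\bar\kappa:=\frac{-9-5\sqrt5+\sqrt{190+90\sqrt5}}{4}\approx-0.1001$. Define on $(0,\bar h(\kappa)]$ $$p(h,\kappa)=\begin{cases}2h-h^2\frac{-\kappa}{1-\kappa}, & h\in(0,1],\\[2pt] \frac{h(2-h)(2-\kappa h)}{2-(1+\kappa)h}, & h\in[1,\bar h(\kappa)].\end{cases}$$ Then the step size $h_*$ maximizing $h\mapsto p(h,\kappa)$ over $(0,\bar h(\kappa)]$ (equivalently, minimizing the worst-case bound $\frac{2L[f(x_0)-f_*]}{1+Np(h,\kappa)}$ for the gradient method with constant step $h/L$ on $f\in\mathcal{F}_{\mu,L}$) is $$h_*(\kappa)=\begin{cases}h_{\mathrm{opt}}, & \kappa\le\bar\kappa,\\ \bar h(\kappa), & \bar\kappa<\kappa\le0,\end{cases}$$ where $h_{\mathrm{opt}}$ is the unique solution in $[1,\bar h(\kappa)]$ of $$-\kappa(1+\kappa)h^3+\big[3\kappa+(1+\kappa)^2\big]h^2-4(1+\kappa)h+4=0.$$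
   Context: For $L>0$ and $\mu\le L$, $\mathcal{F}_{\mu,L}(\mathbb{R}^d)$ denotes the class of differentiable functions $f:\mathbb{R}^d\to\mathbb{R}$ such that both $\frac L2\|\cdot\|^2-f$ and $f-\frac{\mu}{2}\|\cdot\|^2$ are convex. *)

(* Defs.v *)
From Stdlib Require Import Reals.
Open Scope R_scope.

Definition hbar (k : R) : R := 3 / (1 + k + sqrt (1 - k + k ^ 2)).

Definition kbar : R := (-9 - 5 * sqrt 5 + sqrt (190 + 90 * sqrt 5)) / 4.

(* p(h,kappa), piecewise; the two branches agree at h = 1. *)
Definition pfun (h k : R) : R :=
  if Rle_dec h 1 then 2 * h - h ^ 2 * (- k / (1 - k))
  else h * (2 - h) * (2 - k * h) / (2 - (1 + k) * h).

Definition cubic (h k : R) : R :=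
  - k * (1 + k) * h ^ 3 + (3 * k + (1 + k) ^ 2) * h ^ 2 - 4 * (1 + k) * h + 4.

Definition is_unique_maximizer (k h : R) : Prop :=
  0 < h <= hbar k /\
  (forall h', 0 < h' <= hbar k -> pfun h' k <= pfun h k) /\
  (forall h', 0 < h' <= hbar k -> pfun h' k = pfun h k -> h' = h).

(* Main.v *)
Require Import Defs.
From Stdlib Require Import Reals.
From Stdlib Require Import Lra Psatz.
From Coquelicot Require Import Coquelicot.
Open Scope R_scope.

Definition qf (k h : R) : R := h * (2 - h) * (2 - k * h) / (2 - (1 + k) * h).
Definition gder (k h : R) : R :=
  -3 * k * (1 + k) * h ^ 2 + 2 * (3 * k + (1 + k) ^ 2) * h - 4 * (1 + k).

Lemma qf_der k c : 2 - (1+k)*c <> 0 ->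
  derivable_pt_lim (qf k) c (2 * cubic c k / (2 - (1+k)*c)^2).
Proof.
  intros Hc. apply is_derive_Reals. unfold qf, cubic.
  auto_derive. exact Hc. field. exact Hc.
Qed.

Lemma cubic_der k c : derivable_pt_lim (fun h => cubic h k) c (gder k c).
Proof.
  apply is_derive_Reals. unfold cubic, gder. auto_derive. auto. ring.
Qed.

Lemma gder_neg k h : k <= 0 -> 1 <= h < 2 -> gder k h < 0.
Proof.
  intros Hk Hh.
  assert (E : gder k h = (2*h-4) + k*(-3*h^2+10*h-4) + k^2*(2*h-3*h^2)) by (unfold gder; ring).
  rewrite E.
  assert (0 < -3*h^2+10*h-4) by nra.
  assert (2*h - 3*h^2 < 0) by nra.
  assert (k * (-3*h^2+10*h-4) <= 0) by nra.
  assert (0 <= k^2) by nra.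
  assert (k^2 * (2*h-3*h^2) <= 0) by nra.
  lra.
Qed.

Lemma hbar_facts k : k <= 0 ->
  1 < hbar k < 2 /\ k * hbar k ^ 2 - 2 * (1+k) * hbar k + 3 = 0 /\
  0 < 2 - (1+k) * hbar k /\
  0 < 1 + k + sqrt (1 - k + k^2) /\ hbar k * (1 + k + sqrt (1 - k + k^2)) = 3.
Proof.
  intros Hk.
  set (s := sqrt (1 - k + k^2)).
  assert (Hs0 : 0 <= s) by apply sqrt_pos.
  assert (Hs2 : s * s = 1 - k + k^2) by (apply sqrt_sqrt; nra).
  assert (Has : 0 < 1 + k + s).
  { destruct (Rle_dec 0 (1+k)).
    - assert (0 < s) by nra. lra.
    - nra. }
  unfold hbar. fold s.
  set (H := 3 / (1 + k + s)).
  assert (HH : H * (1 + k + s) = 3) by (unfold H; field; lra).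
  assert (Hs32 : s < 2 - k) by nra.
  assert (Hs12 : s > 1/2 - k) by nra.
  refine (conj _ (conj _ (conj _ (conj Has HH)))).
  - split; nra.
  - assert (Hk2 : (k * H ^ 2 - 2 * (1 + k) * H + 3) * (1+k+s)^2 = 0).
    { replace ((k * H ^ 2 - 2 * (1 + k) * H + 3) * (1+k+s)^2) with
        (k * (H*(1+k+s))^2 - 2*(1+k)*(H*(1+k+s))*(1+k+s) + 3*(1+k+s)^2) by ring.
      rewrite HH. nra. }
    apply Rmult_integral in Hk2. destruct Hk2 as [Hk2|Hk2]; auto. nra.
  - assert (2 * s > 1 + k).
    { destruct (Rle_dec (1+k) 0). assert (0 < s) by nra. lra. nra. }
    nra.
Qed.

Lemma kbar_facts : -1 < kbar < 0 /\
  kbar ^ 2 + (9 + 5 * sqrt 5) / 2 * kbar + 1 = 0 /\ 9/5 < sqrt 5.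
Proof.
  set (r := sqrt 5).
  assert (Hr0 : 0 <= r) by apply sqrt_pos.
  assert (Hr2 : r * r = 5) by (apply sqrt_sqrt; lra).
  assert (Hr1 : 9/5 < r) by nra.
  set (t := sqrt (190 + 90 * r)).
  assert (Ht0 : 0 <= t) by apply sqrt_pos.
  assert (Ht2 : t * t = 190 + 90 * r) by (apply sqrt_sqrt; nra).
  unfold kbar. fold r. fold t.
  assert (t > 5 + 5 * r) by nra.
  assert (t < 9 + 5 * r) by nra.
  split; [split; lra|split; [|exact Hr1]].
  field_simplify. nra.
Qed.

Lemma cubic_hbar k : k <= 0 ->
  (k <= kbar -> cubic (hbar k) k <= 0) /\ (kbar < k -> 0 < cubic (hbar k) k).
Proof.
  intros Hk.
  destruct (hbar_facts k Hk) as [HH12 [HZ [HD [Has HHas]]]].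
  destruct kbar_facts as [[Hkb1 Hkb0] [Hfk Hr1]].
  set (H := hbar k) in *.
  set (s := sqrt (1 - k + k^2)) in *.
  assert (Hs0 : 0 <= s) by apply sqrt_pos.
  assert (Hs2 : s * s = 1 - k + k^2) by (apply sqrt_sqrt; nra).
  destruct (Req_dec k 0) as [Hk0|Hk0].
  { subst k. assert (H = 3/2) by lra.
    split; intros; [lra|]. unfold cubic. rewrite H0. lra. }
  assert (Hkn : k < 0) by lra.
  set (a := 1 + k) in *.
  set (E := a*(5*k-2*a^2)*H + 3*a^2 - 5*k).
  assert (HE : k * cubic H k = E).
  { assert (k * cubic H k - E = (-k*a*H + 3*k - a^2) * (k * H ^ 2 - 2 * a * H + 3))
      by (unfold cubic, E, a; ring).
    rewrite HZ in H0. lra. }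
  set (F := (3*a^2-5*k)*s - a*(3*a^2-10*k)).
  assert (HF : (a + s) * E = F).
  { replace ((a+s)*E) with (3*a*(5*k-2*a^2) + (3*a^2-5*k)*(a+s) + a*(5*k-2*a^2)*(H*(a+s) - 3)) by (unfold E; ring).
    rewrite HHas. unfold F; ring. }
  assert (Hsgn : cubic H k <= 0 <-> 0 <= F).
  { split; intro Hc.
    - rewrite <- HF. apply Rmult_le_pos; [lra|]. rewrite <- HE. nra.
    - rewrite <- HF in Hc. assert (0 <= E) by nra. rewrite <- HE in H0. nra. }
  assert (Hsgn2 : 0 < cubic H k <-> F < 0).
  { split; intro Hc.
    - rewrite <- HF. assert (E < 0) by (rewrite <- HE; nra). nra.
    - rewrite <- HF in Hc. assert (E < 0) by nra. rewrite <- HE in H0. nra. }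
  assert (Hspos : 0 < s) by nra.
  destruct (Rle_dec k (-1)) as [Hkm1|Hkm1].
  { assert (0 < F).
    { unfold F. assert (a <= 0) by (unfold a; lra).
      assert (0 < 3*a^2 - 5*k) by nra. assert (0 <= -a*(3*a^2-10*k)) by nra. nra. }
    split; intros; [apply Hsgn; lra | lra]. }
  assert (Ha : 0 < a) by (unfold a; lra).
  set (X := (3*a^2-5*k)*s). set (Y := a*(3*a^2-10*k)).
  assert (HX : 0 < X) by (unfold X; nra).
  assert (HY : 0 < Y) by (unfold Y; nra).
  set (r := sqrt 5) in *.
  set (al := (9 + 5 * r) / 2) in *.
  set (f1 := k^2 + al*k + 1). set (f2 := k^2 + (9 - 5*r)/2*k + 1).
  assert (Hr2 : r * r = 5) by (apply sqrt_sqrt; lra).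
  assert (HXY : X*X - Y*Y = 3 * k * (f1 * f2)).
  { unfold X, Y, f1, f2, al, a.
    replace ((3 * (1 + k) ^ 2 - 5 * k) * s * ((3 * (1 + k) ^ 2 - 5 * k) * s))
      with ((3 * (1 + k) ^ 2 - 5 * k)^2 * (s*s)) by ring.
    rewrite Hs2.
    replace (3 * k * ((k ^ 2 + (9 + 5 * r) / 2 * k + 1) * (k ^ 2 + (9 - 5 * r) / 2 * k + 1)))
      with (3 * k * ((k^2+1)^2 + 9*k*(k^2+1) + (81 - 25*(r*r))/4 * k^2)) by field.
    rewrite Hr2. field. }
  assert (Hf2 : 0 < f2) by (unfold f2; nra).
  assert (Hf1 : f1 = (k - kbar) * (k + kbar + al)).
  { unfold f1. replace ((k - kbar) * (k + kbar + al)) with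
      (k^2 + al*k + 1 - (kbar ^ 2 + al * kbar + 1)) by ring. rewrite Hfk. ring. }
  assert (Hal : 0 < k + kbar + al) by (unfold al; lra).
  assert (HF' : F = X - Y) by (unfold F, X, Y; ring).
  split; intro Hkk.
  - apply Hsgn. rewrite HF'.
    assert (f1 <= 0) by (rewrite Hf1; nra).
    assert (f1 * f2 <= 0) by nra.
    assert (0 <= X*X - Y*Y) by (rewrite HXY; nra).
    nra.
  - apply Hsgn2. rewrite HF'.
    assert (0 < f1) by (rewrite Hf1; nra).
    assert (0 < f1 * f2) by nra.
    assert (X*X - Y*Y < 0) by (rewrite HXY; nra).
    nra.
Qed.

Lemma D_pos k h : k <= 0 -> 1 <= h <= hbar k -> 0 < 2 - (1+k)*h.
Proof.
  intros Hk Hh. destruct (hbar_facts k Hk) as [_ [_ [HD _]]].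
  destruct (Rle_dec 0 (1+k)); nra.
Qed.

Lemma cubic_decr k x y : k <= 0 -> 1 <= x -> x < y -> y <= hbar k -> cubic y k < cubic x k.
Proof.
  intros Hk Hx Hxy Hy. destruct (hbar_facts k Hk) as [[_ H2] _].
  destruct (MVT_cor2 (fun h => cubic h k) (gder k) x y Hxy) as [c [Hc1 Hc2]].
  { intros c _. apply cubic_der. }
  assert (gder k c < 0) by (apply gder_neg; lra).
  nra.
Qed.

Lemma q_mono k x y : k <= 0 -> 1 <= x -> x < y -> y <= hbar k ->
  ((forall c, x < c < y -> 0 < cubic c k) -> qf k x < qf k y) /\
  ((forall c, x < c < y -> cubic c k < 0) -> qf k y < qf k x).
Proof.
  intros Hk Hx Hxy Hy.
  destruct (MVT_cor2 (qf k) (fun c => 2 * cubic c k / (2 - (1+k)*c)^2) x y Hxy) as [c [Hc1 Hc2]].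
  { intros c Hc. apply qf_der. assert (0 < 2 - (1+k)*c) by (apply D_pos; lra). lra. }
  assert (HD : 0 < 2 - (1+k)*c) by (apply D_pos; lra).
  assert (HD2 : 0 < (2 - (1+k)*c)^2) by (apply pow_lt; lra).
  split; intro Hs; specialize (Hs c Hc2).
  - assert (0 < 2 * cubic c k / (2 - (1 + k) * c) ^ 2).
    { apply Rdiv_lt_0_compat; lra. }
    nra.
  - assert (2 * cubic c k / (2 - (1 + k) * c) ^ 2 < 0).
    { unfold Rdiv. assert (0 < / (2 - (1 + k) * c) ^ 2) by (apply Rinv_0_lt_compat; lra). nra. }
    nra.
Qed.

Lemma pfun_small k h : k <= 0 -> 0 < h <= 1 -> pfun h k <= qf k 1 /\ (h < 1 -> pfun h k < qf k 1).
Proof.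
  intros Hk Hh. unfold pfun, qf. destruct (Rle_dec h 1); [|lra].
  replace (1 * (2 - 1) * (2 - k * 1) / (2 - (1 + k) * 1)) with (2 - 1 ^ 2 * (- k / (1 - k))) by (field; lra).
  set (c := - k / (1 - k)).
  assert (0 <= c < 1).
  { unfold c. split. apply Rdiv_le_0_compat; lra.
    apply (Rmult_lt_reg_r (1 - k)); [lra|]. unfold Rdiv. rewrite Rmult_assoc, Rinv_l; lra. }
  assert (Hc2 : 0 < 2 - c * (1 + h)) by nra.
  assert (E : 2 - 1 ^ 2 * c - (2 * h - h ^ 2 * c) = (1 - h) * (2 - c * (1 + h))) by ring.
  split; [|intro]. 
  - assert (0 <= (1 - h) * (2 - c * (1 + h))) by (apply Rmult_le_pos; lra). lra.
  - assert (0 < (1 - h) * (2 - c * (1 + h))) by (apply Rmult_lt_0_compat; lra). lra.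
Qed.

Lemma pfun_big k h : 1 < h -> pfun h k = qf k h.
Proof. intros. unfold pfun, qf. destruct (Rle_dec h 1); [lra|reflexivity]. Qed.

Lemma maximizer k m : k <= 0 -> 1 < m <= hbar k ->
  (forall c, 1 <= c < m -> 0 < cubic c k) ->
  (forall c, m < c <= hbar k -> cubic c k < 0) -> is_unique_maximizer k m.
Proof.
  intros Hk Hm Hpos Hneg.
  assert (Key : forall h', 0 < h' <= hbar k -> h' <> m -> pfun h' k < pfun m k).
  { intros h' Hh' Hne. rewrite (pfun_big k m) by lra.
    destruct (Rle_dec h' 1) as [Hle|Hgt].
    - destruct (pfun_small k h' Hk (conj (proj1 Hh') Hle)) as [P1 _].
      assert (qf k 1 < qf k m).
      { apply (q_mono k 1 m Hk); try lra. intros c Hc; apply Hpos; lra. }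
      lra.
    - rewrite (pfun_big k h') by lra.
      destruct (Rlt_le_dec h' m).
      + apply (q_mono k h' m Hk); try lra. intros c Hc; apply Hpos; lra.
      + apply (q_mono k m h' Hk); try lra. intros c Hc; apply Hneg; lra. }
  split; [lra|split].
  - intros h' Hh'. destruct (Req_dec h' m); [subst; lra|]. left; apply Key; auto.
  - intros h' Hh' Heq. destruct (Req_dec h' m); auto. specialize (Key h' Hh' H). lra.
Qed.

Theorem proposition4p6 (L mu : R) (HL : 0 < L) (Hmu : mu <= 0) :
  let k := mu / L in
  (k <= kbar ->
     exists hopt : R,
       (1 <= hopt <= hbar k /\ cubic hopt k = 0) /\
       (forall h, 1 <= h <= hbar k -> cubic h k = 0 -> h = hopt) /\
       is_unique_maximizer k hopt) /\
  (kbar < k -> is_unique_maximizer k (hbar k)).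
Proof.
  intros k.
  assert (Hk : k <= 0).
  { unfold k, Rdiv. assert (0 < / L) by (apply Rinv_0_lt_compat; lra). nra. }
  destruct (hbar_facts k Hk) as [[H1 H2] _].
  destruct (cubic_hbar k Hk) as [C1 C2].
  assert (Hc1 : cubic 1 k = 1) by (unfold cubic; ring).
  split; intro Hkk.
  - specialize (C1 Hkk).
    assert (Hcont : continuity (fun h => cubic h k)).
    { intro x. apply derivable_continuous_pt. exists (gder k x). apply cubic_der. }
    destruct (IVT_cor (fun h => cubic h k) 1 (hbar k) Hcont) as [m [Hm Hcm]].
    { lra. }
    { rewrite Hc1. lra. }
    assert (Hm1 : 1 < m).
    { destruct (Req_dec m 1); [subst; lra | lra]. }
    exists m. split; [split; [lra|exact Hcm]|split].
    + intros h Hh Hch. destruct (Rtotal_order h m) as [Hlt|[Heq|Hgt]]; auto.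
      * pose proof (cubic_decr k h m Hk (proj1 Hh) Hlt (proj2 Hm)). lra.
      * pose proof (cubic_decr k m h Hk (Rlt_le _ _ Hm1) Hgt (proj2 Hh)). lra.
    + apply maximizer; auto; try lra.
      * intros c Hc. destruct (Req_dec c 1); [subst; lra|].
        pose proof (cubic_decr k c m Hk (proj1 Hc) (proj2 Hc) (proj2 Hm)). lra.
      * intros c Hc. pose proof (cubic_decr k m c Hk (Rlt_le _ _ Hm1) (proj1 Hc) (proj2 Hc)). lra.
  - specialize (C2 Hkk).
    apply maximizer; auto; try lra.
    + intros c Hc. destruct (Req_dec c 1); [subst; lra|].
      pose proof (cubic_decr k c (hbar k) Hk (proj1 Hc) (proj2 Hc) (Rle_refl _)). lra.
    + intros c Hc. lra.
Qed.
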